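(* Let $a_2,a_3$ be integers with $1<a_2<a_3$ and $A=\{1,a_2,a_3\}$. If $SG(A,n,p)$ is a canonical stride generator, then there is no stride generator $SG(A,n',p')$ with $n'<n$ (for any $p'$).
   Context: For integers $n$ and $i\ge 0$, an integer $x$ has an $n$-generation of order $i$ if there are integers $c_1,c_2\ge 0$ with $x+ia_3=c_2a_2+c_1$ and $c_1+c_2\le n+i$. For integers $n$ and $p\ge0$, $SG(A,n,p)$ is a stride generator if: (A) every integer $0\le x<a_3$ has an $n$-generation of some order $\le p$; (B) at least one integer $0\le x<a_3$ has no $n$-generation of order $<p$; (C) at least one integer $0\le y<a_3$ has no $(n-1)$-generation of any order $\le p+1$. Any such $y$ is a break. A break $y$ is canonical if there is no integer $j\ge 0$ with $y+ja_3=c_2a_2+c_1$, $c_1,c_2\ge0$, $c_1+c_2\le (n-1)+j$. A stride generator is canonical if all its breaks are canonical. *)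

(* Defs.v *)
From Stdlib Require Import ZArith Lia.
Open Scope Z_scope.

Definition has_gen (a2 a3 n i x : Z) : Prop :=
  0 <= i /\
  exists c1 c2 : Z, 0 <= c1 /\ 0 <= c2 /\
    x + i * a3 = c2 * a2 + c1 /\ c1 + c2 <= n + i.

Definition is_break (a2 a3 n p y : Z) : Prop :=
  0 <= y < a3 /\ forall i, 0 <= i <= p + 1 -> ~ has_gen a2 a3 (n - 1) i y.

Definition stride_generator (a2 a3 n p : Z) : Prop :=
  0 <= p /\
  (forall x, 0 <= x < a3 -> exists i, 0 <= i <= p /\ has_gen a2 a3 n i x) /\
  (exists x, 0 <= x < a3 /\ forall i, 0 <= i < p -> ~ has_gen a2 a3 n i x) /\
  (exists y, is_break a2 a3 n p y).

Definition canonical_break (a2 a3 n y : Z) : Prop :=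
  forall j, 0 <= j -> ~ has_gen a2 a3 (n - 1) j y.

Definition canonical_stride_generator (a2 a3 n p : Z) : Prop :=
  stride_generator a2 a3 n p /\
  forall y, is_break a2 a3 n p y -> canonical_break a2 a3 n y.

(* Main.v *)
Require Import Defs.
From Stdlib Require Import ZArith Lia.
Open Scope Z_scope.

Theorem lemma13 (a2 a3 n p : Z) :
  1 < a2 < a3 ->
  canonical_stride_generator a2 a3 n p ->
  forall n' p' : Z, n' < n -> ~ stride_generator a2 a3 n' p'.
Proof.
  intros _ [[_ [_ [_ [y Hy]]]] Hcan] n' p' Hn [_ [HA _]].
  pose proof (Hcan y Hy) as Hc.
  destruct Hy as [Hy _].
  destruct (HA y Hy) as [i [Hi [Hi0 [c1 [c2 [H1 [H2 [H3 H4]]]]]]]].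
  apply (Hc i Hi0). split; [exact Hi0|].
  exists c1, c2. repeat split; lia.
Qed.
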